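(* Let $A\in\mathbb{R}^{n\times d}$, $S\in\mathbb{R}^{d\times m}$, $\lambda>0$, and let $f:\mathbb{R}^n\to\mathbb{R}$ be convex and differentiable with $\mu$-Lipschitz gradient. Let $x^*$ be the unique minimizer of $x\mapsto f(Ax)+\frac{\lambda}{2}\|x\|_2^2$ over $\mathbb{R}^d$, let $\alpha^*$ be any minimizer of $\alpha\mapsto f(AS\alpha)+\frac{\lambda}{2}\|S\alpha\|_2^2$ over $\mathbb{R}^m$, and set $\widetilde{x}=-\frac{1}{\lambda}A^\top\nabla f(AS\alpha^* )$. If $\lambda\ge 2\mu Z_f^2$, then $$\|\widetilde{x}-x^*\|_2\le\sqrt{\frac{\mu}{2\lambda}}\,Z_f\,\|x^*\|_2,$$ and consequently $$\|\widetilde{x}-x^*\|_2\le\sqrt{\frac{\mu}{2\lambda}}\,\|P_S^\perp A^\top\|_2\,\|x^*\|_2 .$$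
   Context: $f^*(z)=\sup_{w}\{w^\top z-f(w)\}$ is the Fenchel conjugate of $f$, with domain $\mathrm{dom} f^*=\{z: f^*(z)<+\infty\}$. $z^*=\nabla f(Ax^* )$ is the (unique) solution of the dual problem $\max_z -f^*(z)-\frac{1}{2\lambda}\|A^\top z\|_2^2$. $P_S=S(S^\top S)^\dagger S^\top$ is the orthogonal projector onto $\mathrm{range}(S)$ and $P_S^\perp=I_d-P_S$. The quantity $Z_f=Z_f(A,S)$ is defined by $$Z_f(A,S)=\sup_{\Delta\in(\mathrm{dom} f^*-z^* ),\,\Delta\neq 0}\left(\frac{\Delta^\top A P_S^\perp A^\top\Delta}{\|\Delta\|_2^2}\right)^{1/2}.$$ $\|\cdot\|_2$ on matrices is the spectral norm. *)

(* Defs.v *)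
From HB Require Import structures.
From Stdlib Require Import Reals Lra Psatz ClassicalEpsilon FunctionalExtensionality.
From mathcomp Require Import all_boot all_order all_algebra.
Set Implicit Arguments. Unset Strict Implicit. Unset Printing Implicit Defensive.
Import Order.TTheory GRing.Theory Num.Theory.
Local Open Scope ring_scope.

Definition Reqb (x y : R) : bool := if Req_EM_T x y then true else false.
Lemma ReqP : Equality.axiom Reqb.
Proof. move=> x y; rewrite /Reqb; case: Req_EM_T => h; constructor => //. Qed.
HB.instance Definition _ := hasDecEq.Build R ReqP.

Definition Rfind (P : pred R) (n : nat) : option R :=
  match excluded_middle_informative (exists x, P x) with
  | left h => Some (proj1_sig (constructive_indefinite_description _ h))
  | right _ => None end.
Lemma Rfind_correct P n x : Rfind P n = Some x -> P x.
Proof. rewrite /Rfind; case: excluded_middle_informative => // h [<-].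
exact: proj2_sig (constructive_indefinite_description _ h). Qed.
Lemma Rfind_complete (P : pred R) : (exists x, P x) -> exists n, Rfind P n.
Proof. move=> h; exists 0%N; rewrite /Rfind; case: excluded_middle_informative => //. Qed.
Lemma Rfind_ext (P Q : pred R) : P =1 Q -> Rfind P =1 Rfind Q.
Proof. move=> h; have -> : P = Q by apply: functional_extensionality. by []. Qed.
HB.instance Definition _ := hasChoice.Build R Rfind_correct Rfind_complete Rfind_ext.

Lemma RaddA : forall x y z : R, Rplus x (Rplus y z) = Rplus (Rplus x y) z. Proof. move=> *; lra. Qed.
Lemma RaddC : forall x y : R, Rplus x y = Rplus y x. Proof. move=> *; lra. Qed.
Lemma Radd0 : forall x : R, Rplus (IZR Z0) x = x. Proof. move=> *; lra. Qed.
Lemma RaddN : forall x : R, Rplus (Ropp x) x = (IZR Z0). Proof. move=> *; lra. Qed.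
HB.instance Definition _ := GRing.isZmodule.Build R RaddA RaddC Radd0 RaddN.
Lemma RmulA : forall x y z : R, Rmult x (Rmult y z) = Rmult (Rmult x y) z. Proof. move=> *; ring. Qed.
Lemma RmulC : forall x y : R, Rmult x y = Rmult y x. Proof. move=> *; ring. Qed.
Lemma Rmul1 : forall x : R, Rmult (IZR (Zpos xH)) x = x. Proof. move=> *; ring. Qed.
Lemma RmulDl : forall x y z : R, Rmult (Rplus x y) z = Rplus (Rmult x z) (Rmult y z). Proof. move=> *; ring. Qed.
Lemma R1neq0 : ((IZR (Zpos xH)) != (IZR Z0) :> R). Proof. apply/eqP; lra. Qed.
HB.instance Definition _ := GRing.Zmodule_isComNzRing.Build R RmulA RmulC Rmul1 RmulDl R1neq0.
Definition Rinvx (x : R) : R := if Reqb x (IZR Z0) then (IZR Z0) else Rinv x.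
Lemma RmulVf (x : R) : x != 0 -> Rinvx x * x = 1.
Proof. move/eqP=> h; rewrite /Rinvx; case: ReqP => // _; exact: Rinv_l. Qed.
Lemma Rinv0 : Rinvx (0 : R) = 0. Proof. by rewrite /Rinvx; case: ReqP. Qed.
HB.instance Definition _ := GRing.ComNzRing_isField.Build R RmulVf Rinv0.

Definition Rleb (x y : R) : bool := if Rle_dec x y then true else false.
Definition Rltb (x y : R) : bool := if Rlt_dec x y then true else false.
Lemma RlebP x y : reflect (Rle x y) (Rleb x y).
Proof. rewrite /Rleb; case: Rle_dec => h; constructor => //. Qed.
Lemma RltbP x y : reflect (Rlt x y) (Rltb x y).
Proof. rewrite /Rltb; case: Rlt_dec => h; constructor => //. Qed.
Lemma RaddE (x y : R) : x + y = Rplus x y. Proof. by []. Qed.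
Lemma RmulE (x y : R) : x * y = Rmult x y. Proof. by []. Qed.
Lemma RoppE (x : R) : - x = Ropp x. Proof. by []. Qed.
Lemma R0E : (0 : R) = IZR Z0. Proof. by []. Qed.
Lemma Rle0_add (x y : R) : Rleb 0 x -> Rleb 0 y -> Rleb 0 (x + y).
Proof. move=> /RlebP h1 /RlebP h2; apply/RlebP; change (Rle (IZR Z0) (Rplus x y)); change (Rle (IZR Z0) x) in h1; change (Rle (IZR Z0) y) in h2; lra. Qed.
Lemma Rle0_mul (x y : R) : Rleb 0 x -> Rleb 0 y -> Rleb 0 (x * y).
Proof. move=> /RlebP h1 /RlebP h2; apply/RlebP; change (Rle (IZR Z0) (Rmult x y)); change (Rle (IZR Z0) x) in h1; change (Rle (IZR Z0) y) in h2; nra. Qed.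
Lemma Rle0_anti (x : R) : Rleb 0 x -> Rleb x 0 -> x = 0.
Proof. move=> /RlebP ? /RlebP ?; apply: Rle_antisym => //. Qed.
Lemma Rsub_ge0 (x y : R) : Rleb 0 (y - x) = Rleb x y.
Proof. apply/RlebP/RlebP => h.
- change (Rle (IZR Z0) (Rplus y (Ropp x))) in h; lra.
- change (Rle (IZR Z0) (Rplus y (Ropp x))); lra. Qed.
Lemma Rle0_total (x : R) : Rleb 0 x || Rleb x 0.
Proof. case: (RlebP 0 x) => //= hn; apply/RlebP; change (Rle x (IZR Z0)); change (~ Rle (IZR Z0) x) in hn; lra. Qed.
Lemma RnormN (x : R) : Rabs (- x) = Rabs x. Proof. exact: Rabs_Ropp. Qed.
Lemma Rge0_norm (x : R) : Rleb 0 x -> Rabs x = x.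
Proof. move=> /RlebP ?; exact: Rabs_pos_eq. Qed.
Lemma Rlt_def (x y : R) : Rltb x y = (y != x) && Rleb x y.
Proof. apply/RltbP/andP => [h|[/eqP h1 /RlebP h2]]; last by lra.
split; [apply/eqP; lra | apply/RlebP; lra]. Qed.
HB.instance Definition _ := Num.IntegralDomain_isLeReal.Build R
  Rle0_add Rle0_mul Rle0_anti Rsub_ge0 Rle0_total RnormN Rge0_norm Rlt_def.

Definition dotv {k : nat} (u v : 'cV[R]_k) : R := (u^T *m v) 0 0.
Definition norm2 {k : nat} (v : 'cV[R]_k) : R := sqrt (\sum_(i < k) (v i 0) ^+ 2).

Definition convex_fun {k : nat} (f : 'cV[R]_k -> R) : Prop :=
  forall (x y : 'cV[R]_k) (t : R), 0 <= t -> t <= 1 ->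
    f (t *: x + (1 - t) *: y) <= t * f x + (1 - t) * f y.

Definition is_gradient {k : nat} (f : 'cV[R]_k -> R) (g : 'cV[R]_k -> 'cV[R]_k) : Prop :=
  forall x : 'cV[R]_k, forall eps : R, 0 < eps -> exists delta : R, 0 < delta /\
    forall h : 'cV[R]_k, norm2 h < delta ->
      `| f (x + h) - f x - dotv (g x) h | <= eps * norm2 h.

Definition lipschitz {k : nat} (g : 'cV[R]_k -> 'cV[R]_k) (mu : R) : Prop :=
  forall x y : 'cV[R]_k, norm2 (g x - g y) <= mu * norm2 (x - y).

(* z belongs to dom f^*, i.e. f-conjugate(z) = sup_w (w^T z - f w) < +oo. *)
Definition in_dom_conj {k : nat} (f : 'cV[R]_k -> R) (z : 'cV[R]_k) : Prop :=
  exists M : R, forall w : 'cV[R]_k, dotv w z - f w <= M.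

Definition is_sup (E : R -> Prop) (s : R) : Prop :=
  (forall r, E r -> r <= s) /\ (forall b, (forall r, E r -> r <= b) -> s <= b).

Definition is_pinv {p q : nat} (M : 'M[R]_(p, q)) (X : 'M[R]_(q, p)) : Prop :=
  [/\ M *m X *m M = M, X *m M *m X = X, (M *m X)^T = M *m X & (X *m M)^T = X *m M].
Definition pinv {p q : nat} (M : 'M[R]_(p, q)) : 'M[R]_(q, p) :=
  epsilon (inhabits 0) (is_pinv M).

Definition projS {d m : nat} (S : 'M[R]_(d, m)) : 'M[R]_d :=
  S *m pinv (S^T *m S) *m S^T.
Definition projS_perp {d m : nat} (S : 'M[R]_(d, m)) : 'M[R]_d := 1%:M - projS S.

(* The set whose supremum is Z_f(A,S), with zstar = grad f (A xstar).
   0 is added so that the supremum over an empty index set is 0. *)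
Definition Zf_set {n d m : nat} (f : 'cV[R]_n -> R) (A : 'M[R]_(n, d))
    (S : 'M[R]_(d, m)) (zstar : 'cV[R]_n) : R -> Prop :=
  fun r => r = 0 \/ exists Delta : 'cV[R]_n,
    in_dom_conj f (zstar + Delta) /\ Delta != 0 /\
    r = sqrt (((Delta^T *m A *m projS_perp S *m A^T *m Delta) 0 0) / norm2 Delta ^+ 2).

(* Spectral (operator 2-)norm: sup_{v <> 0} ||M v|| / ||v|| (0 if q = 0). *)
Definition spec_norm_set {p q : nat} (M : 'M[R]_(p, q)) : R -> Prop :=
  fun r => r = 0 \/ exists v : 'cV[R]_q, v != 0 /\ r = norm2 (M *m v) / norm2 v.

(* Main.v *)
Require Import Defs.
From HB Require Import structures.
From Stdlib Require Import Reals ClassicalEpsilon.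
From mathcomp Require Import all_boot all_order all_algebra.
From mathcomp Require Import ring lra.
Import Order.TTheory GRing.Theory Num.Theory.
Set Implicit Arguments. Unset Strict Implicit. Unset Printing Implicit Defensive.
Local Open Scope ring_scope.

Lemma sqrt_ge0 (x : R) : 0 <= sqrt x.
Proof. apply/RlebP; exact: sqrt_pos. Qed.

Lemma sqrtK2 (x : R) : 0 <= x -> sqrt x ^+ 2 = x.
Proof. move=> /RlebP h; rewrite expr2; exact: sqrt_sqrt. Qed.

Lemma sqrt_sq (x : R) : 0 <= x -> sqrt (x ^+ 2) = x.
Proof. move=> /RlebP h; rewrite expr2; exact: sqrt_square. Qed.

Lemma le_sqrt (a b : R) : a <= b -> sqrt a <= sqrt b.
Proof. move=> /RlebP h; apply/RlebP; exact: sqrt_le_1_alt. Qed.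

Lemma sqrt_eq0 (x : R) : 0 <= x -> sqrt x = 0 -> x = 0.
Proof. move=> h1 h2; by rewrite -(sqrtK2 h1) h2 expr0n. Qed.

Lemma sq_le (a b : R) : 0 <= b -> a ^+ 2 <= b ^+ 2 -> a <= b.
Proof. move=> hb h. rewrite !expr2 in h. nra. Qed.

Lemma dotvE k (u v : 'cV[R]_k) : dotv u v = \sum_i u i 0 * v i 0.
Proof. rewrite /dotv !mxE; apply: eq_bigr => i _; by rewrite mxE. Qed.

Lemma dotvC k (u v : 'cV[R]_k) : dotv u v = dotv v u.
Proof. rewrite !dotvE; apply: eq_bigr => i _; by rewrite mulrC. Qed.

Lemma dotvDl k (u v w : 'cV[R]_k) : dotv (u + v) w = dotv u w + dotv v w.
Proof. rewrite !dotvE -big_split; apply: eq_bigr => i _; by rewrite !mxE mulrDl. Qed.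

Lemma dotvZl k a (u w : 'cV[R]_k) : dotv (a *: u) w = a * dotv u w.
Proof. rewrite !dotvE mulr_sumr; apply: eq_bigr => i _; by rewrite !mxE mulrA. Qed.

Lemma dotvNl k (u w : 'cV[R]_k) : dotv (- u) w = - dotv u w.
Proof. by rewrite -scaleN1r dotvZl mulN1r. Qed.

Lemma dotvBl k (u v w : 'cV[R]_k) : dotv (u - v) w = dotv u w - dotv v w.
Proof. by rewrite dotvDl dotvNl. Qed.

Lemma dotvDr k (u v w : 'cV[R]_k) : dotv w (u + v) = dotv w u + dotv w v.
Proof. by rewrite !(dotvC w) dotvDl. Qed.
Lemma dotvZr k a (u w : 'cV[R]_k) : dotv w (a *: u) = a * dotv w u.
Proof. by rewrite !(dotvC w) dotvZl. Qed.
Lemma dotvNr k (u w : 'cV[R]_k) : dotv w (- u) = - dotv w u.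
Proof. by rewrite !(dotvC w) dotvNl. Qed.
Lemma dotvBr k (u v w : 'cV[R]_k) : dotv w (u - v) = dotv w u - dotv w v.
Proof. by rewrite !(dotvC w) dotvBl. Qed.
Lemma dotv0l k (u : 'cV[R]_k) : dotv 0 u = 0.
Proof. by rewrite -(scale0r 0) dotvZl mul0r. Qed.
Lemma dotv0r k (u : 'cV[R]_k) : dotv u 0 = 0.
Proof. by rewrite dotvC dotv0l. Qed.

Lemma dotv_mul p q (M : 'M[R]_(p, q)) (u : 'cV[R]_p) (v : 'cV[R]_q) :
  dotv u (M *m v) = dotv (M^T *m u) v.
Proof. by rewrite /dotv trmx_mul trmxK mulmxA. Qed.

Lemma dotvv_ge0 k (v : 'cV[R]_k) : 0 <= dotv v v.
Proof. rewrite dotvE; apply: sumr_ge0 => i _; rewrite -expr2; exact: sqr_ge0. Qed.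

Lemma dotvv_eq0 k (v : 'cV[R]_k) : dotv v v = 0 -> v = 0.
Proof.
rewrite dotvE => /psumr_eq0P h.
have {}h := h (fun i _ => (ltac:(rewrite -expr2; exact: sqr_ge0) : 0 <= v i 0 * v i 0)).
apply/matrixP => i j; rewrite (ord1 j) mxE.
have := h i isT; rewrite -expr2 => /eqP; by rewrite sqrf_eq0 => /eqP.
Qed.

Lemma norm2E k (v : 'cV[R]_k) : norm2 v = sqrt (dotv v v).
Proof. rewrite /norm2 dotvE; congr sqrt; apply: eq_bigr => i _; by rewrite expr2. Qed.

Lemma norm2_ge0 k (v : 'cV[R]_k) : 0 <= norm2 v.
Proof. exact: sqrt_ge0. Qed.

Lemma norm2_sq k (v : 'cV[R]_k) : norm2 v ^+ 2 = dotv v v.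
Proof. rewrite norm2E sqrtK2 //; exact: dotvv_ge0. Qed.

Lemma norm2_eq0 k (v : 'cV[R]_k) : norm2 v = 0 -> v = 0.
Proof. rewrite norm2E => /sqrt_eq0 h; apply: dotvv_eq0; apply: h; exact: dotvv_ge0. Qed.

Lemma norm2_0 k : norm2 (0 : 'cV[R]_k) = 0.
Proof. rewrite norm2E dotv0l; exact: sqrt_0. Qed.

Lemma CS k (u v : 'cV[R]_k) : dotv u v <= norm2 u * norm2 v.
Proof.
have [ha|ha] := eqVneq (norm2 u) 0.
  by rewrite (norm2_eq0 ha) dotv0l norm2_0 mul0r.
have [hb|hb] := eqVneq (norm2 v) 0.
  by rewrite (norm2_eq0 hb) dotv0r norm2_0 mulr0.
have a0 : 0 < norm2 u by rewrite lt_def ha norm2_ge0.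
have b0 : 0 < norm2 v by rewrite lt_def hb norm2_ge0.
have h := dotvv_ge0 (norm2 v *: u - norm2 u *: v).
rewrite !(dotvBl, dotvBr, dotvZl, dotvZr) -!norm2_sq (dotvC v u) in h.
set a := norm2 u in h a0 *; set b := norm2 v in h b0 *; set c := dotv u v in h *.
rewrite !expr2 in h.
have : 0 <= a * b * (2 * (a * b - c)) by nra.
rewrite pmulr_rge0; [nra | nra].
Qed.

Lemma norm2Z k t (v : 'cV[R]_k) : 0 <= t -> norm2 (t *: v) = t * norm2 v.
Proof.
move=> ht; rewrite norm2E dotvZl dotvZr mulrA -expr2 -norm2_sq -exprMn sqrt_sq //.
by apply: mulr_ge0 => //; exact: norm2_ge0.
Qed.

Lemma fo_convex k (f : 'cV[R]_k -> R) g : convex_fun f -> is_gradient f g ->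
  forall x y, f x + dotv (g x) (y - x) <= f y.
Proof.
move=> cf gf x y; set h := y - x.
have [h0|hn0] := eqVneq h 0.
  have -> : y = x by apply/eqP; rewrite -subr_eq0 -/h h0.
  by rewrite h0 dotv0r addr0.
have nh0 : 0 < norm2 h.
  rewrite lt_def norm2_ge0 andbT; apply/eqP => /norm2_eq0; exact/eqP.
rewrite leNgt; apply/negP => H.
set gap := f x + dotv (g x) h - f y.
have gap0 : 0 < gap by rewrite /gap subr_gt0.
have eps0 : 0 < gap / (2 * norm2 h) by apply: divr_gt0 => //; nra.
have [delta [d0 hd]] := gf x _ eps0.
set t := Order.min 1 (delta / (2 * norm2 h)).
have t0 : 0 < t by rewrite lt_min ltr01 /=; apply: divr_gt0 => //; nra.
have t1 : t <= 1 by rewrite ge_min lexx.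
have tn : t * norm2 h < delta.
  have : t <= delta / (2 * norm2 h) by rewrite ge_min lexx orbT.
  rewrite ler_pdivlMr; last nra.
  nra.
have nth : norm2 (t *: h) = t * norm2 h by rewrite norm2Z // ltW.
have := hd (t *: h); rewrite nth => /(_ tn).
rewrite ler_norml dotvZr => /andP [H1 _].
have := cf y x t (ltW t0) t1.
have -> : t *: y + (1 - t) *: x = x + t *: h.
  by rewrite /h; apply/matrixP => i j; rewrite !mxE; ring.
move=> H2.
have e : gap / (2 * norm2 h) * (t * norm2 h) = t * gap / 2.
  field; apply/eqP; nra.
rewrite e in H1.
move: H1 H2; rewrite /gap => H1 H2.
have : t * gap <= t * gap / 2 by rewrite /gap; nra.
nra.
Qed.

Lemma INR_natr (n : nat) : INR n = n%:R.
Proof. elim: n => [|n IH] //. rewrite S_INR IH -addn1 natrD. by []. Qed.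

Lemma descent_N k (f : 'cV[R]_k -> R) g mu : convex_fun f -> is_gradient f g ->
  lipschitz g mu -> forall x h (N : nat), (0 < N)%N ->
  f (x + h) <= f x + dotv (g x) h + mu * dotv h h * (N%:R + 1) / (2 * N%:R).
Proof.
move=> cf gf lg x h N N0.
have Nr0 : 0 < N%:R :> R by rewrite ltr0n.
set Nr := N%:R : R in Nr0 *.
set gh := dotv (g x) h; set hh := dotv h h.
have nh0 := norm2_ge0 h.
have hhE : norm2 h * norm2 h = hh by rewrite -expr2 norm2_sq.
have claim : forall j : nat, (j <= N)%N ->
  f (x + (j%:R / Nr) *: h) <= f x + j%:R / Nr * gh + mu * hh * (j%:R * (j%:R + 1)) / (2 * Nr ^+ 2).
  elim=> [|j IH] hj.
    rewrite !(mul0r, scale0r, addr0, mulr0); apply/RlebP; exact: Rle_refl.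
  have {IH} IH := IH (ltnW hj).
  have ej : j.+1%:R = j%:R + 1 :> R by rewrite -addn1 natrD.
  set y := x + (j%:R / Nr) *: h in IH.
  set p := x + (j.+1%:R / Nr) *: h.
  have H1 := fo_convex cf gf p y.
  have e1 : y - p = (- (1 / Nr)) *: h.
    rewrite /y /p ej; apply/matrixP => a b; rewrite !mxE; field; apply/eqP; nra.
  rewrite e1 dotvZr in H1.
  have e2 : p - x = (j.+1%:R / Nr) *: h.
    by rewrite /p; apply/matrixP => a b; rewrite !mxE; ring.
  have tk0 : 0 <= j.+1%:R / Nr by apply: divr_ge0 => //; exact: ltW.
  have H2 := lg p x; rewrite e2 norm2Z // in H2.
  have H3 := CS (g p - g x) h; rewrite dotvBl -/gh in H3.
  have H4 : norm2 (g p - g x) * norm2 h <= mu * (j.+1%:R / Nr * norm2 h) * norm2 h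
    by apply: ler_wpM2r.
  have H5 : mu * (j.+1%:R / Nr * norm2 h) * norm2 h = mu * (j.+1%:R / Nr) * hh
    by rewrite -hhE; ring.
  rewrite H5 in H4.
  have H6 : 1 / Nr * dotv (g p) h <= 1 / Nr * (gh + mu * (j.+1%:R / Nr) * hh).
    apply: ler_wpM2l; first by apply: divr_ge0 => //; exact: ltW.
    lra.
  have E : f y + j%:R / Nr * gh + mu * hh * (j%:R * (j%:R + 1)) / (2 * Nr ^+ 2)
     - f y + 1 / Nr * (gh + mu * (j.+1%:R / Nr) * hh)
     = j.+1%:R / Nr * gh + mu * hh * (j.+1%:R * (j.+1%:R + 1)) / (2 * Nr ^+ 2).
    rewrite ej; field; apply/eqP; nra.
  lra.
have := claim N (leqnn N).
rewrite divff; last by apply/eqP; nra.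
rewrite scale1r mul1r.
have -> : mu * hh * (Nr * (Nr + 1)) / (2 * Nr ^+ 2) = mu * hh * (Nr + 1) / (2 * Nr).
  field; apply/eqP; nra.
done.
Qed.

Lemma RinvE (x : R) : x != 0 -> x^-1 = Rinv x.
Proof. move=> /eqP h. rewrite /GRing.inv /= /Rinvx. by case: ReqP. Qed.

Lemma descent k (f : 'cV[R]_k -> R) g mu : convex_fun f -> is_gradient f g ->
  lipschitz g mu -> forall x h,
  f (x + h) <= f x + dotv (g x) h + mu / 2 * dotv h h.
Proof.
move=> cf gf lg x h.
set c := mu / 2 * dotv h h.
have HN := descent_N cf gf lg x h.
have [c0|c0] := lerP c 0.
  have := HN 1%N isT.
  have -> : mu * dotv h h * (1%:R + 1) / (2 * 1%:R) = 2 * c by rewrite /c; field.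
  lra.
rewrite leNgt; apply/negP => H.
set D := f (x + h) - f x - dotv (g x) h.
have Dc : 0 < (D - c) / c by apply: divr_gt0 => //; rewrite /D; lra.
have [N [HN1 HN2]] := archimed_cor1 _ (elimT (RltbP _ _) Dc).
rewrite INR_natr in HN1.
have N0 : (0 < N)%N by apply/ssrnat.ltP.
have Nr0 : 0 < N%:R :> R by rewrite ltr0n.
have := HN N N0.
have -> : mu * dotv h h * (N%:R + 1) / (2 * N%:R) = c + c / N%:R.
  rewrite /c; field; apply/eqP; nra.
have h1 : (N%:R)^-1 < (D - c) / c.
  rewrite (@RinvE N%:R) ?gt_eqF //; apply/RltbP; exact: HN1.
have h2 : c / N%:R < D - c.
  move: h1; rewrite ltr_pdivlMr // => h1.
  by rewrite mulrC.
rewrite /D in h2.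
lra.
Qed.

Lemma coco_aux k (f : 'cV[R]_k -> R) g mu : convex_fun f -> is_gradient f g ->
  lipschitz g mu -> forall x y s,
  f x - f y + dotv (g x) (y - x) + s * dotv (g y - g x) (g y - g x)
    <= mu * s ^+ 2 / 2 * dotv (g y - g x) (g y - g x).
Proof.
move=> cf gf lg x y s.
set G := g y - g x.
have H1 := fo_convex cf gf x (y - s *: G).
have H2 := descent cf gf lg y (- (s *: G)).
rewrite -/(y - s *: G) in H2.
have e1 : y - s *: G - x = (y - x) - s *: G.
  by apply/matrixP => a b; rewrite !mxE; ring.
rewrite e1 dotvBr dotvZr in H1.
rewrite dotvNr dotvZr dotvNl dotvNr dotvZl dotvZr opprK in H2.
have e2 : dotv (g y) G - dotv (g x) G = dotv G G by rewrite -dotvBl.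
have e3 : mu / 2 * (s * (s * dotv G G)) = mu * s ^+ 2 / 2 * dotv G G.
  by rewrite expr2; field.
have e4 : s * dotv (g y) G - s * dotv (g x) G = s * dotv G G by rewrite -mulrBr e2.
lra.
Qed.

Lemma cocoercive k (f : 'cV[R]_k -> R) g mu : convex_fun f -> is_gradient f g ->
  lipschitz g mu -> forall x y,
  dotv (g y - g x) (g y - g x) <= mu * dotv (g y - g x) (y - x).
Proof.
move=> cf gf lg x y.
have [mu0|mu0] := lerP mu 0.
  have := lg y x => H.
  have : norm2 (g y - g x) <= 0.
    apply: (le_trans H); apply: mulr_le0_ge0 => //; exact: norm2_ge0.
  move=> H'; have : norm2 (g y - g x) = 0 by apply/eqP; rewrite eq_le H' norm2_ge0.
  move=> /norm2_eq0 ->; rewrite !dotv0l mulr0; apply/RlebP; exact: Rle_refl.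
have A1 := coco_aux cf gf lg x y (mu^-1).
have A2 := coco_aux cf gf lg y x (mu^-1).
have eG : g x - g y = - (g y - g x) by rewrite opprB.
rewrite eG dotvNl dotvNr opprK in A2.
set G := g y - g x in A1 A2 *.
have e1 : dotv (g y) (x - y) = - dotv (g y) (y - x) by rewrite -dotvNr opprB.
have e2 : dotv (g x) (y - x) - dotv (g y) (y - x) = - dotv G (y - x) by rewrite -dotvBl -dotvNl opprB.
have e3 : mu * mu^-1 ^+ 2 / 2 = mu^-1 / 2 by rewrite expr2; field; apply/eqP; lra.
rewrite e3 in A1 A2.
have : mu^-1 * dotv G G <= dotv G (y - x) by lra.
move=> H; have := ler_wpM2l (ltW mu0) H.
rewrite mulrA divff ?mul1r //; apply/eqP; lra.
Qed.

Lemma small_eq0 (a b : R) : 0 <= a -> (forall s, 0 < s -> a <= s * b) -> a = 0.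
Proof.
move=> a0 H; apply/eqP; rewrite eq_le a0 andbT.
have [b0|b0] := lerP b 0.
  have := H 1 ltr01; lra.
have [a00|a00] := lerP a 0; first done.
have s0 : 0 < a / (2 * b) by apply: divr_gt0 => //; lra.
have := H _ s0.
have -> : a / (2 * b) * b = a / 2 by field; apply/eqP; lra.
lra.
Qed.

Lemma opt_cond n k p (f : 'cV[R]_n -> R) g mu (K : 'M[R]_(n, k)) (L : 'M[R]_(p, k))
  (lam : R) (y0 : 'cV[R]_k) :
  convex_fun f -> is_gradient f g -> lipschitz g mu ->
  (forall y, f (K *m y0) + lam / 2 * norm2 (L *m y0) ^+ 2
             <= f (K *m y) + lam / 2 * norm2 (L *m y) ^+ 2) ->
  K^T *m g (K *m y0) + lam *: (L^T *m (L *m y0)) = 0.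
Proof.
move=> cf gf lg Hmin.
set c := K^T *m g (K *m y0) + lam *: (L^T *m (L *m y0)).
apply: dotvv_eq0.
set B := mu / 2 * dotv (K *m c) (K *m c) + lam / 2 * dotv (L *m c) (L *m c).
apply: (small_eq0 (b := B)); first exact: dotvv_ge0.
move=> s s0.
have H := Hmin (y0 - s *: c).
have eK : K *m (y0 - s *: c) = K *m y0 + - (s *: (K *m c)).
  by rewrite mulmxBr scalemxAr.
have eL : L *m (y0 - s *: c) = L *m y0 - s *: (L *m c).
  by rewrite mulmxBr scalemxAr.
rewrite eK eL !norm2_sq in H.
have D := descent cf gf lg (K *m y0) (- (s *: (K *m c))).
rewrite !(dotvNr, dotvNl, dotvZr, dotvZl, opprK) in D.
rewrite !(dotvBl, dotvBr, dotvZr, dotvZl) in H.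
have e1 : dotv (g (K *m y0)) (K *m c) = dotv (K^T *m g (K *m y0)) c by rewrite dotv_mul.
have e2 : dotv (L *m y0) (L *m c) = dotv (L^T *m (L *m y0)) c by rewrite dotv_mul.
have e3 : dotv (L *m c) (L *m y0) = dotv (L^T *m (L *m y0)) c by rewrite dotvC dotv_mul.
have e4 : dotv c c = dotv (K^T *m g (K *m y0)) c + lam * dotv (L^T *m (L *m y0)) c.
  by rewrite {1}/c dotvDl dotvZl.
rewrite e1 in D; rewrite e2 e3 in H.
set X := dotv (K^T *m g (K *m y0)) c in D e4.
set Y := dotv (L^T *m (L *m y0)) c in H e4.
have E5 : lam / 2 * (dotv (L *m y0) (L *m y0) - s * Y - (s * Y - s * (s * dotv (L *m c) (L *m c))))
  = lam / 2 * dotv (L *m y0) (L *m y0) + lam / 2 * (- (s * Y) - s * Y + s * (s * dotv (L *m c) (L *m c))).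
  by rewrite /Y; field.
have : 0 <= s * (s * B - dotv c c).
  rewrite e4 /B.
  have -> : s * (s * (mu / 2 * dotv (K *m c) (K *m c) + lam / 2 * dotv (L *m c) (L *m c)) - (X + lam * Y)) =
    (mu / 2 * (s * (s * dotv (K *m c) (K *m c))) - s * X) + lam / 2 * (- (s * Y) - s * Y + s * (s * dotv (L *m c) (L *m c))).
    by rewrite /X /Y; field.
  lra.
move=> hh; nra.
Qed.

Lemma trmxB p q (A B : 'M[R]_(p, q)) : (A - B)^T = A^T - B^T.
Proof. by apply/matrixP => i j; rewrite !mxE. Qed.

Lemma BBt_eq0 p q (B : 'M[R]_(p, q)) : B *m B^T = 0 -> B = 0.
Proof.
move=> h; apply/matrixP => i j.
have : (B *m B^T) i i = 0 by rewrite h mxE.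
rewrite mxE => /psumr_eq0P h2.
have {}h2 := h2 (fun k _ => (ltac:(rewrite mxE -expr2; exact: sqr_ge0) : 0 <= B i k * B^T k i)).
have := h2 j isT; rewrite !mxE -expr2 => /eqP; by rewrite sqrf_eq0 => /eqP.
Qed.

Lemma unit_CCt r q (C : 'M[R]_(r, q)) : row_free C -> C *m C^T \in unitmx.
Proof.
move=> fC; rewrite -row_free_unit -kermx_eq0.
set Kk := kermx (C *m C^T).
have h := mulmx_ker (C *m C^T); rewrite -/Kk in h.
have h2 : (Kk *m C) *m (Kk *m C)^T = 0.
  by rewrite trmx_mul !mulmxA -(mulmxA Kk) h mul0mx.
by rewrite -(mulmx_free_eq0 _ fC) (BBt_eq0 h2).
Qed.

Lemma pinv_exists_BC p q r (B : 'M[R]_(p, r)) (C : 'M[R]_(r, q)) :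
  row_free B^T -> row_free C -> exists X, is_pinv (B *m C) X.
Proof.
move=> fB fC.
have uC := unit_CCt fC.
have uB := unit_CCt fB; rewrite trmxK in uB.
set GB := invmx (B^T *m B); set GC := invmx (C *m C^T).
have sGB : GB^T = GB by rewrite /GB trmx_inv trmx_mul trmxK.
have sGC : GC^T = GC by rewrite /GC trmx_inv trmx_mul trmxK.
have hC : forall k (Y : 'M[R]_(k, _)), Y *m C *m C^T *m GC = Y.
  by move=> k Y; rewrite -(mulmxA Y C) -mulmxA mulmxV // mulmx1.
have hB : forall k (Y : 'M[R]_(k, _)), Y *m GB *m B^T *m B = Y.
  by move=> k Y; rewrite -mulmxA -mulmxA mulVmx // mulmx1.
exists (C^T *m GC *m GB *m B^T).
have MX : B *m C *m (C^T *m GC *m GB *m B^T) = B *m GB *m B^T.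
  by rewrite !mulmxA hC.
have XM : C^T *m GC *m GB *m B^T *m (B *m C) = C^T *m GC *m C.
  by rewrite !mulmxA hB.
split.
- by rewrite MX !mulmxA hB.
- by rewrite XM !mulmxA hC.
- by rewrite MX !trmx_mul trmxK sGB !mulmxA.
- by rewrite XM !trmx_mul trmxK sGC !mulmxA.
Qed.

Lemma pinv_exists p q (M : 'M[R]_(p, q)) : exists X, is_pinv M X.
Proof.
have fB : row_free (col_base M)^T.
  by rewrite /row_free mxrank_tr; exact: col_base_full.
have := pinv_exists_BC fB (row_base_free M).
by rewrite mulmx_base.
Qed.

Lemma pinv_spec p q (M : 'M[R]_(p, q)) : is_pinv M (pinv M).
Proof. rewrite /pinv; apply: epsilon_spec; exact: pinv_exists. Qed.

Lemma gen_inv_S d m (S : 'M[R]_(d, m)) (Y : 'M[R]_m) :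
  (S^T *m S) *m Y *m (S^T *m S) = S^T *m S -> S *m Y *m (S^T *m S) = S.
Proof.
move=> h; apply/eqP; rewrite -subr_eq0; apply/eqP.
set E := S *m Y *m (S^T *m S) - S.
have h' := h; rewrite !mulmxA in h'.
have h1 : S^T *m E = 0 by rewrite /E mulmxBr !mulmxA h' subrr.
apply: trmx_inj; rewrite trmx0; apply: BBt_eq0; rewrite trmxK.
rewrite /E trmxB mulmxBl -/E !trmx_mul -!mulmxA h1 !mulmx0 subrr //.
Qed.

Lemma projS_props d m (S : 'M[R]_(d, m)) :
  [/\ (projS S)^T = projS S, projS S *m projS S = projS S &
      projS S *m S = S].
Proof.
set M := S^T *m S; set Y := pinv M.
have [h1 _ _ _] := pinv_spec M; rewrite -/Y in h1.
have sM : M^T = M by rewrite /M trmx_mul trmxK.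
have h1' : M *m Y^T *m M = M.
  by rewrite -{1}sM -{2}sM -!trmx_mul mulmxA h1 sM.
have e1 := gen_inv_S h1.
have e2 := gen_inv_S h1'.
have e3 : M *m Y *m S^T = S^T.
  by rewrite -{1}sM -(trmxK Y) -!trmx_mul mulmxA e2.
have PT : (projS S)^T = S *m Y^T *m S^T by rewrite /projS !trmx_mul trmxK !mulmxA.
have PTP : (projS S)^T *m projS S = (projS S)^T.
  by rewrite PT /projS -/M -/Y !mulmxA -(mulmxA _ S^T S) -/M -(mulmxA _ M Y) -(mulmxA _ (M *m Y) S^T) e3.
have sP : (projS S)^T = projS S.
  by apply/esym; rewrite -{1}(trmxK (projS S)) -PTP trmx_mul trmxK.
split => //.
- by rewrite -{1}sP PTP sP.
- by rewrite /projS -mulmxA e1.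
Qed.

Lemma norm2N k (v : 'cV[R]_k) : norm2 (- v) = norm2 v.
Proof. by rewrite !norm2E dotvNl dotvNr opprK. Qed.

Lemma Zf_elem n d m (A : 'M[R]_(n, d)) (S : 'M[R]_(d, m)) (Delta : 'cV[R]_n) :
  Delta != 0 ->
  sqrt (((Delta^T *m A *m projS_perp S *m A^T *m Delta) 0 0) / norm2 Delta ^+ 2)
  = norm2 (projS_perp S *m (A^T *m Delta)) / norm2 Delta.
Proof.
move=> hD.
have [PT PP PS] := projS_props S.
set Q := projS_perp S.
have QT : Q^T = Q by rewrite /Q /projS_perp trmxB trmx1 PT.
have QQ : Q^T *m Q = Q.
  rewrite QT /Q /projS_perp mulmxBl !mul1mx mulmxBr mulmx1 PP subrr subr0.
  done.
have t0 : 0 < norm2 Delta.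
  rewrite lt_def norm2_ge0 andbT; apply/eqP => /norm2_eq0 h; by rewrite h eqxx in hD.
have eq : (Delta^T *m A *m Q *m A^T *m Delta) 0 0 = dotv (Q *m (A^T *m Delta)) (Q *m (A^T *m Delta)).
  by rewrite dotv_mul mulmxA QQ /dotv trmx_mul trmx_mul trmxK QT !mulmxA.
rewrite eq -norm2_sq.
transitivity (sqrt ((norm2 (Q *m (A^T *m Delta)) / norm2 Delta) ^+ 2)).
  congr sqrt; rewrite /Rdiv -RinvE; first by rewrite expr_div_n.
  by rewrite expf_neq0 // gt_eqF.
apply: sqrt_sq; apply: divr_ge0; [exact: norm2_ge0 | exact: ltW].
Qed.

Lemma perp_props d m (S : 'M[R]_(d, m)) :
  (projS_perp S)^T = projS_perp S /\ (projS_perp S)^T *m projS_perp S = projS_perp S.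
Proof.
have [PT PP PS] := projS_props S.
have QT : (projS_perp S)^T = projS_perp S by rewrite /projS_perp trmxB trmx1 PT.
split => //; rewrite QT /projS_perp mulmxBl !mul1mx mulmxBr mulmx1 PP subrr subr0 //.
Qed.

Lemma Zf_bound n d m (f : 'cV[R]_n -> R) (A : 'M[R]_(n, d)) (S : 'M[R]_(d, m)) zs Zf
  (Delta : 'cV[R]_n) :
  is_sup (Zf_set f A S zs) Zf -> in_dom_conj f (zs + Delta) ->
  norm2 (projS_perp S *m (A^T *m Delta)) <= Zf * norm2 Delta.
Proof.
move=> [HZ1 _] hdom.
have [D0|D0] := eqVneq Delta 0.
  rewrite D0 !mulmx0 !norm2_0 mulr0. exact: lexx.
have t0 : 0 < norm2 Delta.
  rewrite lt_def norm2_ge0 andbT; apply/eqP => /norm2_eq0 h; by rewrite h eqxx in D0.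
have := HZ1 _ (or_intror (ex_intro _ Delta (conj hdom (conj D0 erefl)))).
rewrite Zf_elem // ler_pdivrMr //.
Qed.

Lemma Zf_ge0 n d m (f : 'cV[R]_n -> R) (A : 'M[R]_(n, d)) (S : 'M[R]_(d, m)) zs Zf :
  is_sup (Zf_set f A S zs) Zf -> 0 <= Zf.
Proof. by move=> [H _]; apply: H; left. Qed.

Lemma Zf_le_spec n d m (f : 'cV[R]_n -> R) (A : 'M[R]_(n, d)) (S : 'M[R]_(d, m)) zs Zf sn :
  is_sup (Zf_set f A S zs) Zf -> is_sup (spec_norm_set (projS_perp S *m A^T)) sn -> Zf <= sn.
Proof.
move=> [_ HZ2] [Hs1 _]; apply: HZ2 => r [->|[Delta [_ [D0 ->]]]].
  by apply: Hs1; left.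
rewrite Zf_elem //; apply: Hs1; right; exists Delta; split => //.
by rewrite mulmxA.
Qed.

Lemma grad_dom k (f : 'cV[R]_k -> R) g : convex_fun f -> is_gradient f g ->
  forall y, in_dom_conj f (g y).
Proof.
move=> cf gf y; exists (dotv y (g y) - f y) => w.
have := fo_convex cf gf y w.
rewrite dotvBr (dotvC (g y) w) (dotvC (g y) y); lra.
Qed.

Lemma IZR2 : IZR 2 = 2%:R :> R.
Proof. by rewrite -INR_natr (INR_IZR_INZ 2). Qed.

Theorem theorem1 (n d m : nat) (A : 'M[R]_(n, d)) (S : 'M[R]_(d, m)) (lam mu : R)
  (f : 'cV[R]_n -> R) (gradf : 'cV[R]_n -> 'cV[R]_n)
  (xstar : 'cV[R]_d) (alphastar : 'cV[R]_m) (Zf specnorm : R) :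
  0 < lam ->
  convex_fun f ->
  is_gradient f gradf ->
  lipschitz gradf mu ->
  (forall x : 'cV[R]_d,
     f (A *m xstar) + lam / 2 * norm2 xstar ^+ 2 <= f (A *m x) + lam / 2 * norm2 x ^+ 2) ->
  (forall alpha : 'cV[R]_m,
     f (A *m S *m alphastar) + lam / 2 * norm2 (S *m alphastar) ^+ 2
       <= f (A *m S *m alpha) + lam / 2 * norm2 (S *m alpha) ^+ 2) ->
  is_sup (Zf_set f A S (gradf (A *m xstar))) Zf ->
  is_sup (spec_norm_set (projS_perp S *m A^T)) specnorm ->
  2 * mu * Zf ^+ 2 <= lam ->
  let xtilde := - lam^-1 *: (A^T *m gradf (A *m S *m alphastar)) in
  norm2 (xtilde - xstar) <= sqrt (mu / (2 * lam)) * Zf * norm2 xstar /\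
  norm2 (xtilde - xstar) <= sqrt (mu / (2 * lam)) * specnorm * norm2 xstar.
Proof.
move=> lam0 cf gf lg Hx Ha HZ Hspec Hlam xtilde.
have Zf0 := Zf_ge0 HZ.
have Zsp := Zf_le_spec HZ Hspec.
have X0 := norm2_ge0 xstar.
set c := sqrt _.
have c0 : 0 <= c by exact: sqrt_ge0.
suff main : norm2 (xtilde - xstar) <= c * Zf * norm2 xstar.
  split => //; apply: (le_trans main); apply: ler_wpM2r => //; apply: ler_wpM2l => //.
have [PT PP PS] := projS_props S.
have [QT QQ] := perp_props S.
set P := projS S in PT PP PS.
set Q := projS_perp S in QT QQ *.
have PQ : P = 1%:M - Q by rewrite /Q /projS_perp opprB addrC subrK.
set zs := gradf (A *m xstar) in HZ *.
set zt := gradf (A *m S *m alphastar) in xtilde *.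
set Delta := zt - zs.
set u := A^T *m Delta.
have lamV : lam^-1 * lam = 1 by rewrite mulVf // gt_eqF.
have O1 := @opt_cond n d d f gradf mu A 1%:M lam xstar cf gf lg
  (fun x => ltac:(rewrite !mul1mx; exact: Hx x)).
rewrite trmx1 !mul1mx -/zs in O1.
have xsE : xstar = - lam^-1 *: (A^T *m zs).
  move/eqP: O1; rewrite addr_eq0 => /eqP ->.
  by rewrite scalerN scaleNr opprK scalerA lamV scale1r.
have O2 := @opt_cond n m d f gradf mu (A *m S) S lam alphastar cf gf lg Ha.
rewrite -/zt in O2.
have O2' : (A *m S)^T *m zt = - (lam *: (S^T *m (S *m alphastar))).
  by move/eqP: O2; rewrite addr_eq0 => /eqP.
have wE : xtilde - xstar = - lam^-1 *: u.
  by rewrite /xtilde {1}xsE /u /Delta mulmxBr scalerBr.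
have StX : S^T *m xtilde = S^T *m (S *m alphastar).
  rewrite /xtilde -scalemxAr [S^T *m (A^T *m zt)]mulmxA -trmx_mul O2'.
  by rewrite scalerN scaleNr opprK scalerA lamV scale1r.
have PX : P *m xtilde = S *m alphastar.
  have PS' := PS; rewrite /P /projS in PS'.
  by rewrite /P /projS -(mulmxA _ S^T) StX !mulmxA PS'.
have key : S *m alphastar - xstar = P *m (xtilde - xstar) - Q *m xstar.
  rewrite -PX mulmxBr /Q /projS_perp mulmxBl mul1mx -/P.
  by rewrite opprB addrA subrK.
have [mu0|mu0] := lerP mu 0.
  have := lg (A *m S *m alphastar) (A *m xstar).
  rewrite -/zs -/zt -/Delta => H.
  have : norm2 Delta <= 0.
    apply: (le_trans H); apply: mulr_le0_ge0 => //; exact: norm2_ge0.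
  move=> H'; have : norm2 Delta = 0 by apply/eqP; rewrite eq_le H' norm2_ge0.
  move=> /norm2_eq0 D0.
  rewrite wE /u D0 mulmx0 scaler0 norm2_0.
  apply: mulr_ge0 => //; exact: mulr_ge0.
have CC := cocoercive cf gf lg (A *m xstar) (A *m S *m alphastar).
rewrite -/zs -/zt -/Delta in CC.
have T2 : dotv Delta Delta = norm2 Delta ^+ 2 by rewrite norm2_sq.
rewrite T2 -mulmxA -mulmxBr dotv_mul -/u key dotvBr wE -scalemxAr dotvZr in CC.
have PuE : P *m u = u - Q *m u by rewrite PQ mulmxBl mul1mx.
rewrite PuE dotvBr in CC.
have uQu : dotv u (Q *m u) = norm2 (Q *m u) ^+ 2.
  by rewrite norm2_sq [RHS]dotv_mul [Q^T *m (Q *m u)]mulmxA QQ dotvC.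
have uQx : dotv u (Q *m xstar) = dotv (Q *m u) xstar by rewrite dotv_mul QT.
rewrite uQu uQx in CC.
have H2 : - dotv (Q *m u) xstar <= norm2 (Q *m u) * norm2 xstar.
  by rewrite -dotvNl -(norm2N (Q *m u)); exact: CS.
have H3 : norm2 (Q *m u) <= Zf * norm2 Delta.
  apply: (Zf_bound HZ); rewrite /Delta addrC subrK; exact: grad_dom.
have U2 : dotv u u = norm2 u ^+ 2 by rewrite norm2_sq.
rewrite U2 in CC.
have wn : norm2 (xtilde - xstar) = lam^-1 * norm2 u.
  rewrite wE scaleNr norm2N norm2Z //; rewrite invr_ge0; exact: ltW.
rewrite wn.
have c2 : c ^+ 2 = mu / (2 * lam).
  rewrite /c /Rdiv -RinvE; last by rewrite IZR2 mulf_neq0 // ?gt_eqF // ltr0n.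
  rewrite IZR2 sqrtK2 //; apply: divr_ge0; [exact: ltW | apply: mulr_ge0 => //; exact: ltW].
set a := norm2 (Q *m u) in CC H2 H3.
set t := norm2 Delta in CC H3.
set U := norm2 u in CC *.
set X := norm2 xstar in H2 *.
set D := dotv (Q *m u) xstar in CC H2.
set li := lam^-1 in CC lamV *.
have a0 : 0 <= a by exact: norm2_ge0.
have t0 : 0 <= t by exact: norm2_ge0.
have U0 : 0 <= U by exact: norm2_ge0.
have li0 : 0 < li by rewrite /li invr_gt0.
have E1 : t ^+ 2 <= mu * (li * a ^+ 2 - li * U ^+ 2 - D).
  move: CC; have -> : - li * (U ^+ 2 - a ^+ 2) = li * a ^+ 2 - li * U ^+ 2 by ring.
  done.
have E2 : mu * (li * U ^+ 2) <= mu * li * a ^+ 2 + mu * a * X - t ^+ 2 by nra.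
have E3 : a ^+ 2 <= Zf ^+ 2 * t ^+ 2.
  rewrite -exprMn; rewrite !expr2; apply: ler_pM => //.
have E4 : mu * li * (Zf ^+ 2 * t ^+ 2) <= t ^+ 2 / 2.
  have : mu * Zf ^+ 2 * li <= 1 / 2.
    have : 2 * mu * Zf ^+ 2 * li <= lam * li by apply: ler_wpM2r => //; exact: ltW.
    rewrite [lam * li]mulrC lamV; lra.
  move=> h; have t20 : 0 <= t ^+ 2 by exact: sqr_ge0.
  have := ler_wpM2r t20 h.
  have -> : mu * Zf ^+ 2 * li * t ^+ 2 = mu * li * (Zf ^+ 2 * t ^+ 2) by ring.
  lra.
have E5 : mu * li * a ^+ 2 <= mu * li * (Zf ^+ 2 * t ^+ 2).
  apply: ler_wpM2l => //; apply: mulr_ge0; [exact: ltW | exact: ltW].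
have E6 : mu * a * X <= mu * Zf * t * X.
  rewrite -!mulrA; apply: ler_wpM2l; first exact: ltW.
  rewrite mulrA; apply: ler_wpM2r => //.
have E7 : mu * Zf * t * X <= t ^+ 2 / 2 + mu ^+ 2 * Zf ^+ 2 * X ^+ 2 / 2.
  have : 0 <= (t - mu * Zf * X) ^+ 2 by exact: sqr_ge0.
  rewrite !expr2; lra.
have E8 : mu * (li * U ^+ 2) <= mu ^+ 2 * Zf ^+ 2 * X ^+ 2 / 2 by lra.
have E9 : li * U ^+ 2 <= mu * Zf ^+ 2 * X ^+ 2 / 2.
  have : mu * (li * U ^+ 2) <= mu * (mu * Zf ^+ 2 * X ^+ 2 / 2).
    by move: E8; rewrite !expr2 -!mulrA; move=> h; apply: (le_trans h); rewrite !mulrA; apply/eqP; rewrite eq_le lexx.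
  by rewrite ler_pM2l.
apply: sq_le.
  apply: mulr_ge0 => //; exact: mulr_ge0.
rewrite !exprMn c2.
have -> : li ^+ 2 * U ^+ 2 = li * (li * U ^+ 2) by rewrite expr2 mulrA.
have : li * (li * U ^+ 2) <= li * (mu * Zf ^+ 2 * X ^+ 2 / 2) by apply: ler_wpM2l => //; exact: ltW.
have -> : mu / (2 * lam) * Zf ^+ 2 * X ^+ 2 = li * (mu * Zf ^+ 2 * X ^+ 2 / 2).
  rewrite /li; field; apply/eqP; lra.
done.
Qed.
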